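(* Let $p$ be prime, $q$ a power of $p$, $R=\mathbb{F}_q[x^p]$, and $V=\{c':c\in\mathbb{F}_q[x]\}=R\oplus xR\oplus\cdots\oplus x^{p-2}R\subset\mathbb{F}_q[x]$ (a free $R$-module of rank $p-1$). For a nonzero squarefree $Q\in\mathbb{F}_q[x]$ let $\Lambda_Q=Q\mathbb{F}_q[x]\cap V$. Then $\Lambda_Q$ is an $R$-submodule of $V$ of index $[V:\Lambda_Q]=q^{\deg Q}$.
   Context: $c'$ denotes the formal derivative of $c\in\mathbb{F}_q[x]$. *)

(* Defs.v *)
From HB Require Import structures.
From mathcomp Require Import all_boot all_order all_algebra all_field.
Set Implicit Arguments. Unset Strict Implicit. Unset Printing Implicit Defensive.
Import GRing.Theory.
Local Open Scope ring_scope.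

Section Defs.
Variable F : fieldType.

(* R = F[x^p]: polynomials whose only nonzero coefficients are at multiples of p *)
Definition inR (p : nat) (r : {poly F}) : Prop :=
  forall i : nat, ~~ (p %| i)%N -> r`_i = 0.

Definition inV (v : {poly F}) : Prop := exists c : {poly F}, v = c^`().

Definition inLambda (Q v : {poly F}) : Prop := (Q %| v) /\ inV v.

Definition squarefree (Q : {poly F}) : Prop :=
  forall d : {poly F}, (d * d %| Q) -> (size d <= 1)%N.

Definition is_R_submodule_of_V (p : nat) (Q : {poly F}) : Prop :=
  [/\ (forall v, inLambda Q v -> inV v),
      inLambda Q 0,
      (forall v w, inLambda Q v -> inLambda Q w -> inLambda Q (v + w)),
      (forall v, inLambda Q v -> inLambda Q (- v)) &
      (forall r v, inR p r -> inLambda Q v -> inLambda Q (r * v))].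

Definition index_in_V (Q : {poly F}) (n : nat) : Prop :=
  exists s : seq {poly F},
    [/\ size s = n,
        (forall v, v \in s -> inV v),
        (forall i j, (i < n)%N -> (j < n)%N -> inLambda Q (s`_i - s`_j) -> i = j) &
        (forall v, inV v -> exists2 u, u \in s & inLambda Q (v - u))].
End Defs.

(* Main.v *)
Require Import Defs.
From HB Require Import structures.
From mathcomp Require Import all_boot all_order all_algebra all_field.
From mathcomp Require Import ring.
Import GRing.Theory.
Local Open Scope ring_scope.

Section Main.
Variable F : finFieldType.
Variable p : nat.
Hypothesis hchar : p \in [pchar F].

Lemma inR_deriv (r : {poly F}) : inR p r -> r^`() = 0.
Proof.
move=> hr; apply/polyP => i; rewrite coef_deriv coef0.
have [d|nd] := boolP (p %| i.+1)%N.
  by rewrite -mulr_natr; move: d; rewrite (dvdn_pcharf hchar) => /eqP ->; rewrite mulr0.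
by rewrite hr // mul0rn.
Qed.

Lemma frob_comp (h : {poly F}) :
  h ^+ p = (map_poly (pFrobenius_aut hchar) h) \Po 'X^p.
Proof.
have hcP : p \in [pchar {poly F}] by rewrite pchar_poly.
elim/poly_ind: h => [|h c IH].
  by rewrite rmorph0 comp_poly0 expr0n /= gtn_eqF // prime_gt0 // (pcharf_prime hchar).
rewrite -(pFrobenius_autE hcP) rmorphD rmorphM /= !pFrobenius_autE IH.
rewrite rmorphD rmorphM /= map_polyX map_polyC comp_polyD comp_polyM comp_polyX comp_polyC.
by rewrite rmorphXn.
Qed.

Lemma frob_bij : bijective (pFrobenius_aut hchar).
Proof. apply: injF_bij; exact: fmorph_inj. Qed.

Lemma deriv0_pth (u : {poly F}) : u^`() = 0 -> exists h : {poly F}, u = h ^+ p.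
Proof.
move=> u0.
have [finv _ finvK] := frob_bij.
have pp := pcharf_prime hchar; have p0 := prime_gt0 pp.
exists (\poly_(i < size u) finv (u`_(i * p))).
rewrite frob_comp; apply/polyP => k; rewrite coef_comp_poly_Xn //.
case: (boolP (p %| k)%N) => [/dvdnP[j ->]|nk].
  rewrite mulnK // coef_map coef_poly /=.
  case: ltnP => hj; first by rewrite finvK.
  rewrite rmorph0 nth_default //; apply: leq_trans hj _; exact: leq_pmulr.
case: k nk => [|k] nk; first by rewrite dvdn0 in nk.
apply/eqP; have := congr1 (fun q : {poly F} => q`_k) u0; rewrite coef_deriv coef0 -mulr_natr => /eqP.
by rewrite mulf_eq0 -(dvdn_pcharf hchar) (negbTE nk) orbF.
Qed.

Lemma sqfree_sep (Q : {poly F}) : Q != 0 -> squarefree Q -> coprimep Q Q^`().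
Proof.
move=> hQ0 hsf.
have: separable_poly Q; last by rewrite unlock.
apply/separable_polyP; split.
  apply/poly_square_freeP => u su; apply/negP => hd.
  have := hsf u; rewrite -expr2 => /(_ hd).
  rewrite leq_eqVlt (negbTE su) ltnS leqn0 size_poly_eq0 => /eqP u0.
  by move: hd hQ0; rewrite u0 expr0n /= dvd0p => ->.
move=> u uQ su; apply/negP => /eqP /deriv0_pth [h uh].
have pp := pcharf_prime hchar.
have hh : h * h %| Q.
  apply: dvdp_trans uQ; rewrite uh -expr2 dvdp_exp2l //; exact: prime_gt1.
have := hsf _ hh => /size1_polyC hc.
move: su; rewrite uh hc -rmorphXn ltnNge size_polyC_leq1 //.
Qed.

Lemma inV0 : inV (0 : {poly F}).
Proof. by exists 0; rewrite deriv0. Qed.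
Lemma inVD (v w : {poly F}) : inV v -> inV w -> inV (v + w).
Proof. by move=> [c ->] [d ->]; exists (c + d); rewrite derivD. Qed.
Lemma inVN (v : {poly F}) : inV v -> inV (- v).
Proof. by move=> [c ->]; exists (- c); rewrite derivN. Qed.
Lemma inVM (r v : {poly F}) : inR p r -> inV v -> inV (r * v).
Proof. by move=> hr [c ->]; exists (r * c); rewrite derivM (@inR_deriv r hr) mul0r add0r. Qed.

Lemma bezout_w (Q : {poly F}) : coprimep Q Q^`() -> exists w, Q %| Q^`() * w - 1.
Proof.
case/Bezout_coprimepP => [[a b]] /= /eqpf_eq [c c0 e].
exists (c^-1 *: b).
have -> : Q^`() * (c^-1 *: b) - 1 = - ((c^-1 *: a) * Q).
  have hb : b * Q^`() = c *: 1 - a * Q by rewrite -e; ring.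
  rewrite -scalerAr mulrC hb scalerBr scalerA mulVf // scale1r -scalerAl.
  by rewrite addrAC subrr add0r.
by rewrite dvdpNr dvdp_mull.
Qed.
End Main.

Theorem mainTheorem16 (p : nat) (F : finFieldType) (hp : prime p)
  (hchar : p \in [pchar F]) (Q : {poly F}) (hQ0 : Q != 0)
  (hQsf : squarefree Q) :
  is_R_submodule_of_V p Q /\ index_in_V Q (#|F| ^ (size Q).-1)%N.
Proof.
split.
  split.
  - by move=> v [].
  - by split; [exact: dvdp0 | exact: inV0].
  - by move=> v w [hv1 hv2] [hw1 hw2]; split; [exact: dvdp_add | exact: inVD].
  - by move=> v [h1 h2]; split; [rewrite dvdpNr | exact: inVN].
  - by move=> r v hr [h1 h2]; split; [exact: dvdp_mull | exact: (@inVM F p hchar)].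
have [w hw] := @bezout_w F Q (@sqfree_sep F p hchar Q hQ0 hQsf).
pose u (f : {poly F}) := (Q * (f * w))^`().
have hu f : Q %| u f - f.
  rewrite /u derivM.
  have -> : Q^`() * (f * w) + Q * (f * w)^`() - f = f * (Q^`() * w - 1) + Q * (f * w)^`() by ring.
  by apply: dvdp_add; [apply: dvdp_mull | apply: dvdp_mulr; apply: dvdpp].
have huV f : inV (u f) by exists (Q * (f * w)).
set m := (size Q).-1.
have hsz : size Q = m.+1 by rewrite /m prednK // size_poly_gt0.
pose Pp (t : m.-tuple F) := \poly_(i < m) t`_i.
have Ppinj : injective Pp.
  move=> t1 t2 E; apply: val_inj; apply: (@eq_from_nth _ 0); rewrite !size_tuple // => k hk.
  by have := congr1 (fun q : {poly F} => q`_k) E; rewrite /Pp !coef_poly hk.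
have Ppsz t : (size (Pp t) <= m)%N by apply: size_poly.
pose e := enum {: m.-tuple F}.
have he : size e = (#|F| ^ m)%N by rewrite /e -cardE card_tuple.
pose t0 : m.-tuple F := [tuple 0 | _ < m].
exists [seq u (Pp t) | t <- e]; split.
- by rewrite size_map he.
- by move=> v /mapP [t _ ->].
- move=> i j hi hj [hd _].
  rewrite -he in hi hj; move: hi hj hd; rewrite /e enumT => hi hj hd.
  rewrite !(nth_map t0) // in hd.
  set fi := Pp _ in hd; set fj := Pp _ in hd.
  have hf : Q %| fi - fj.
    have -> : fi - fj = (u fi - u fj) - (u fi - fi) + (u fj - fj) by ring.
    by rewrite dvdp_add // dvdp_sub.
  have : fi - fj = 0.
    apply/eqP; apply: contraTT hf => hne; apply/negP => /(dvdp_leq hne).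
    have hs : (size (fi - fj)%R <= m)%N.
      by apply: leq_trans (size_polyD _ _) _; rewrite size_polyN geq_max; apply/andP; split; apply: Ppsz.
    by rewrite hsz ltnNge hs.
  move/eqP; rewrite subr_eq0 => /eqP /Ppinj E.
  by apply/eqP; rewrite -(nth_uniq t0 hi hj) ?E // -enumT enum_uniq.
- move=> v hv.
  pose f := v %% Q.
  have hf : (size f <= m)%N by rewrite -ltnS -hsz ltn_modp.
  pose t : m.-tuple F := [tuple f`_i | i < m].
  have Ppt : Pp t = f.
    apply/polyP => k; rewrite coef_poly; case: ltnP => hk.
      by rewrite (nth_mktuple _ _ (Ordinal hk)).
    by rewrite nth_default // (leq_trans hf hk).
  exists (u f); first by apply/mapP; exists t; rewrite ?mem_enum // Ppt.
  split; last by apply: inVD => //; apply: inVN.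
  have -> : v - u f = (v - f) - (u f - f) by ring.
  apply: dvdp_sub => //.
  have -> : v - f = (v %/ Q) * Q by rewrite /f {1}(divp_eq v Q) addrK.
  by apply: dvdp_mull; apply: dvdpp.
Qed.
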